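(* Let $F:\mathbb{R}^n\rightrightarrows\mathbb{R}^p$ be a nearly convex set-valued mapping and $\Omega\subset\mathbb{R}^n$ a nearly convex set such that $\operatorname{ri}(\operatorname{dom} F)\cap\operatorname{ri}\Omega\neq\emptyset$. Then $$\operatorname{ri}\big(F(\Omega)\big)=\bigcup_{x\in(\operatorname{ri}\Omega)\cap\operatorname{ri}(\operatorname{dom} F)}\operatorname{ri} F(x),$$ where $F(\Omega)=\bigcup_{x\in\Omega}F(x)$.
   Context: A set $\Omega\subset\mathbb{R}^k$ is nearly convex if there is a convex set $C$ with $C\subset\Omega\subset\overline{C}$. For an arbitrary set $\Omega$, $\operatorname{ri}\Omega=\{a\in\Omega:\exists\delta>0,\ B(a;\delta)\cap\operatorname{aff}\Omega\subset\Omega\}$. For $F:\mathbb{R}^n\rightrightarrows\mathbb{R}^p$: $\operatorname{dom} F=\{x:F(x)\neq\emptyset\}$, $\operatorname{gph} F=\{(x,y):y\in F(x)\}$; $F$ is nearly convex if $\operatorname{gph} F$ is a nearly convex subset of $\mathbb{R}^n\times\mathbb{R}^p$. *)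

(* Defs.v *)
From HB Require Import structures.
From mathcomp Require Import all_boot all_order all_algebra.
From mathcomp Require Import all_classical all_reals all_analysis.
Set Implicit Arguments. Unset Strict Implicit. Unset Printing Implicit Defensive.
Import Order.TTheory GRing.Theory Num.Theory.
Import numFieldNormedType.Exports.
Local Open Scope classical_set_scope.
Local Open Scope ring_scope.

Section Defs.
Variable R : realType.

Definition enorm (k : nat) (v : 'rV[R]_k) : R :=
  Num.sqrt (\sum_(i < k) v ord0 i ^+ 2).
Definition eball (k : nat) (a : 'rV[R]_k) (d : R) : set 'rV[R]_k :=
  [set x | enorm (x - a) < d].

Definition convex_set (k : nat) (C : set 'rV[R]_k) : Prop :=
  forall x y t, C x -> C y -> 0 <= t <= 1 -> C (t *: x + (1 - t) *: y).

Definition affine_set (k : nat) (A : set 'rV[R]_k) : Prop :=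
  forall x y (t : R), A x -> A y -> A (t *: x + (1 - t) *: y).

Definition aff (k : nat) (Om : set 'rV[R]_k) : set 'rV[R]_k :=
  [set x | forall A, affine_set A -> Om `<=` A -> A x].

Definition nearly_convex (k : nat) (Om : set 'rV[R]_k) : Prop :=
  exists C : set 'rV[R]_k, convex_set C /\ C `<=` Om /\ Om `<=` closure C.

Definition ri (k : nat) (Om : set 'rV[R]_k) : set 'rV[R]_k :=
  [set a | Om a /\ exists d : R, 0 < d /\ eball a d `&` aff Om `<=` Om].

Definition dom (n p : nat) (F : 'rV[R]_n -> set 'rV[R]_p) : set 'rV[R]_n :=
  [set x | F x !=set0].
Definition gph (n p : nat) (F : 'rV[R]_n -> set 'rV[R]_p) : set 'rV[R]_(n + p) :=
  [set z | exists x y, F x y /\ z = row_mx x y].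
Definition nearly_convex_map (n p : nat) (F : 'rV[R]_n -> set 'rV[R]_p) : Prop :=
  nearly_convex (gph F).
Definition image_set (n p : nat) (F : 'rV[R]_n -> set 'rV[R]_p) (Om : set 'rV[R]_n)
  : set 'rV[R]_p := \bigcup_(x in Om) F x.
End Defs.

(* Main.v *)
Require Import Defs.
From mathcomp Require Import all_boot all_order all_algebra.
From mathcomp Require Import all_classical all_reals all_analysis.
From HB Require Import structures.
From mathcomp Require Import ring lra zify.
Require Import Defs.
Set Implicit Arguments. Unset Strict Implicit. Unset Printing Implicit Defensive.
Import Order.TTheory GRing.Theory Num.Theory.
Import numFieldNormedType.Exports.
Local Open Scope classical_set_scope.
Local Open Scope ring_scope.



Section Snorm.
Variable R : realType.
Variable k : nat.
Implicit Types u v w : 'rV[R]_k.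

Definition snorm (k : nat) (v : 'rV[R]_k) : R := \sum_(j < k) `|v ord0 j|.

Lemma sn_ge0 v : 0 <= snorm v.
Proof. by apply: sumr_ge0 => j _. Qed.

Lemma snD u v : snorm (u + v) <= snorm u + snorm v.
Proof.
rewrite /snorm -big_split /=; apply: ler_sum => j _; rewrite mxE; exact: ler_normD.
Qed.

Lemma snZ (t : R) v : snorm (t *: v) = `|t| * snorm v.
Proof.
rewrite /snorm mulr_sumr; apply: eq_bigr => j _; by rewrite mxE normrM.
Qed.

Lemma snN v : snorm (- v) = snorm v.
Proof. rewrite /snorm; apply: eq_bigr => j _; by rewrite mxE normrN. Qed.

Lemma snB u v : snorm (u - v) = snorm (v - u).
Proof. by rewrite -snN opprB. Qed.

Lemma coord_le_sn v j : `|v ord0 j| <= snorm v.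
Proof.
rewrite /snorm (bigD1 j) //= lerDl; apply: sumr_ge0 => i _; exact: normr_ge0.
Qed.

Lemma sn_eq0 v : (forall e, 0 < e -> snorm v < e) -> v = 0.
Proof.
move=> H; have h0 : snorm v <= 0.
  have := sn_ge0 v; rewrite le_eqVlt => /orP[/eqP <- //|h].
  by have := H _ h; rewrite ltxx.
apply/rowP => j; rewrite mxE; apply/eqP; rewrite -normr_le0.
exact: le_trans (coord_le_sn v j) h0.
Qed.

Lemma en_le_sn v : enorm v <= snorm v.
Proof.
have -> : snorm v = Num.sqrt (snorm v ^+ 2) by rewrite sqrtr_sqr ger0_norm ?sn_ge0.
rewrite /enorm ler_sqrt ?sqr_ge0 //.
rewrite expr2 {2}/snorm mulr_sumr.
apply: ler_sum => j _.
rewrite expr2; apply: (@le_trans _ _ (`|v ord0 j| * `|v ord0 j|)).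
  by rewrite -normrM real_ler_norm // realE; apply/orP; left; rewrite -expr2 sqr_ge0.
apply: ler_wpM2r; first exact: normr_ge0.
exact: coord_le_sn.
Qed.

Lemma coord_le_en v j : `|v ord0 j| <= enorm v.
Proof.
rewrite /enorm -sqrtr_sqr ler_sqrt; last by apply: sumr_ge0 => i _; exact: sqr_ge0.
rewrite (bigD1 j) //= lerDl; apply: sumr_ge0 => i _; exact: sqr_ge0.
Qed.

Lemma sn_le_en v : snorm v <= k.+1%:R * enorm v.
Proof.
apply: (@le_trans _ _ (k%:R * enorm v)).
  rewrite /snorm mulr_natl -[X in _ *+ X](card_ord k) -sumr_const.
  apply: ler_sum => j _; exact: coord_le_en.
apply: ler_wpM2r; first by rewrite /enorm sqrtr_ge0.
by rewrite ler_nat.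
Qed.

Definition mnorm m (M : 'M[R]_(k, m)) : R := \sum_(j < m) \sum_(i < k) `|M i j|.

Lemma mnorm_ge0 m (M : 'M[R]_(k, m)) : 0 <= mnorm M.
Proof. apply: sumr_ge0 => j _; apply: sumr_ge0 => i _; exact: normr_ge0. Qed.

Lemma sn_mul m (v : 'rV[R]_k) (M : 'M[R]_(k, m)) : snorm (v *m M) <= snorm v * mnorm M.
Proof.
rewrite /mnorm mulr_sumr /snorm; apply: ler_sum => j _.
rewrite mxE mulr_sumr; apply: le_trans (ler_norm_sum _ _ _) _.
apply: ler_sum => i _; rewrite normrM; apply: ler_wpM2r; first exact: normr_ge0.
exact: coord_le_sn.
Qed.

End Snorm.



Section Basic.
Variable R : realType.
Variable k : nat.
Implicit Types u v w a b c z : 'rV[R]_k.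
Implicit Types S C : set 'rV[R]_k.

Definition approx S b := forall e : R, 0 < e -> exists c, S c /\ snorm (c - b) < e.

Lemma closure_approx S b : closure S b -> approx S b.
Proof.
move=> cl e e0.
have r0 : 0 < e / k.+1%:R by rewrite divr_gt0 // ltr0Sn.
have [c [Sc bc]] := cl _ (nbhsx_ballx b _ r0).
exists c; split => //.
case: bc => _ bc.
apply: (@le_lt_trans _ _ (k%:R * (e / k.+1%:R))).
  rewrite /snorm mulr_natl -[X in _ *+ X](card_ord k) -sumr_const.
  apply: ler_sum => j _; rewrite !mxE.
  have := bc ord0 j; rewrite /ball /= => h.
  by rewrite distrC; apply: ltW.
rewrite mulrA ltr_pdivrMr ?ltr0Sn // mulrC ltr_pM2l // ltr_nat //.
Qed.

Lemma riP S z : ri S z <->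
  S z /\ exists d : R, 0 < d /\ forall w, snorm (w - z) < d -> aff S w -> S w.
Proof.
split.
  move=> [Sz [d [d0 H]]]; split => //; exists d; split => // w wz aw.
  apply: H; split => //; rewrite /eball /=.
  exact: le_lt_trans (en_le_sn _) wz.
move=> [Sz [d [d0 H]]]; split => //; exists (d / k.+1%:R); split.
  by rewrite divr_gt0 // ltr0Sn.
move=> w; rewrite /setI /= => -[wz aw]; apply: H => //.
apply: le_lt_trans (sn_le_en _) _.
by rewrite mulrC -ltr_pdivlMr // ltr0Sn.
Qed.

Lemma aff_affine S : affine_set (aff S).
Proof. move=> x y t ax ay A affA SA; exact: (affA x y t (ax A affA SA) (ay A affA SA)). Qed.

Lemma sub_aff S : S `<=` aff S.
Proof. by move=> x Sx A _ SA; apply: SA. Qed.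

Lemma aff_min S A : affine_set A -> S `<=` A -> aff S `<=` A.
Proof. by move=> affA SA x; apply. Qed.

Lemma aff_mono S T : S `<=` T -> aff S `<=` aff T.
Proof. move=> ST x ax A affA TA; apply: ax => // y Sy; apply: TA; exact: ST. Qed.

Lemma ri_prol S z c : ri S z -> S c ->
  exists2 d0 : R, 0 < d0 & forall d, 0 <= d <= d0 -> S (z + d *: (z - c)).
Proof.
move=> /riP [Sz [d [d0 H]]] Sc.
exists (d / (snorm (z - c) + 1)).
  by rewrite divr_gt0 // ltr_wpDl // sn_ge0.
move=> t /andP [t0 td]; apply: H.
  rewrite addrC addKr snZ ger0_norm //.
  apply: le_lt_trans (ler_wpM2r (sn_ge0 _) td) _.
  rewrite mulrAC ltr_pdivrMr ?ltr_wpDl ?sn_ge0 //.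
  by rewrite ltr_pM2l // ltrDl.
have -> : z + t *: (z - c) = (1 + t) *: z + (1 - (1 + t)) *: c.
  by apply/rowP => j; rewrite !mxE; ring.
apply: aff_affine; exact: sub_aff.
Qed.

Lemma cvx_comb C c0 m (mu : 'I_m -> R) (v : 'I_m -> 'rV[R]_k) :
  convex_set C -> C c0 -> (forall i, C (c0 + v i)) -> (forall i, 0 <= mu i) ->
  \sum_i mu i < 1 -> C (c0 + \sum_i mu i *: v i).
Proof.
move=> cC C0; elim: m mu v => [|m IH] mu v Cv mu0 mu1.
  by rewrite big_ord0 addr0.
rewrite big_ord_recr /=.
move: mu1; rewrite big_ord_recr /= => mu1.
set s := \sum_(i < m) mu (widen_ord (leqnSn m) i) in mu1.
set a := mu ord_max in mu1 *.
have s0 : 0 <= s by apply: sumr_ge0 => i _.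
have a0 : 0 <= a by exact: mu0.
have a1 : a < 1 by apply: le_lt_trans mu1; rewrite lerDr.
have a1' : 0 < 1 - a by rewrite subr_gt0.
have IH' := IH (fun i => mu (widen_ord (leqnSn m) i) / (1 - a))
   (fun i => v (widen_ord (leqnSn m) i)) (fun i => Cv _)
   (fun i => divr_ge0 (mu0 _) (ltW a1')).
have : \sum_(i < m) mu (widen_ord (leqnSn m) i) / (1 - a) < 1.
  by rewrite -mulr_suml ltr_pdivrMr // mul1r ltrBrDr.
move/IH' => Cp.
have -> : c0 + (\sum_(i < m) mu (widen_ord (leqnSn m) i) *: v (widen_ord (leqnSn m) i)
   + a *: v ord_max) =
   a *: (c0 + v ord_max) + (1 - a) *: (c0 + \sum_(i < m)
     (mu (widen_ord (leqnSn m) i) / (1 - a)) *: v (widen_ord (leqnSn m) i)).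
  rewrite !scalerDr scaler_sumr.
  have ne : 1 - a != 0 by rewrite lt0r_neq0.
  under [X in _ = _ + (_ + X)]eq_bigr do rewrite scalerA mulrCA divff // mulr1.
  set T := \sum_(i < m) _.
  apply/rowP => j; rewrite !mxE; ring.
have ha : 0 <= a <= 1 by rewrite a0 /=; exact: ltW.
exact: (cC _ _ a (Cv ord_max) Cp ha).
Qed.

End Basic.



Section Span.
Variable R : realType.
Variable k : nat.
Implicit Types u v w a b c z : 'rV[R]_k.
Implicit Types S C : set 'rV[R]_k.

Lemma rank_incr m (B : 'M[R]_(m, k)) v : ~ (v <= B)%MS ->
  (\rank B < \rank (col_mx B v))%N.
Proof.
move=> nB.
have h : (B < col_mx B v)%MS.
  rewrite ltmxE col_mx_sub submx_refl /=.
  apply/andP; split; last by apply/negP.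
  by have := submx_refl (col_mx B v); rewrite col_mx_sub => /andP[].
by move: h; rewrite ltmxErank => /andP[].
Qed.

Lemma span_exists C c0 : exists m (B : 'M[R]_(m, k)),
  (forall i, C (c0 + row i B)) /\ (forall c, C c -> (c - c0 <= B)%MS).
Proof.
suff H : forall n m (B : 'M[R]_(m, k)), (forall i, C (c0 + row i B)) ->
    (k - \rank B <= n)%N -> exists m (B : 'M[R]_(m, k)),
  (forall i, C (c0 + row i B)) /\ (forall c, C c -> (c - c0 <= B)%MS).
  by apply: (H k 0 0) => [[]//|]; rewrite leq_subr.
elim=> [|n IH] m B CB hn.
  have [all|] := pselect (forall c, C c -> (c - c0 <= B)%MS); first by exists m, B.
  move=> /existsNP [c /not_implyP [Cc nB]].
  have lt := rank_incr nB.
  have := rank_leq_col (col_mx B (c - c0)) => le.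
  by exfalso; lia.
have [all|] := pselect (forall c, C c -> (c - c0 <= B)%MS); first by exists m, B.
move=> /existsNP [c /not_implyP [Cc nB]].
have lt := rank_incr nB.
have := rank_leq_col (col_mx B (c - c0)) => le.
apply: (IH _ (col_mx B (c - c0))); last by lia.
move=> i; case: (split_ordP i) => j ->.
  by rewrite rowKu.
rewrite rowKd.
have -> : row j (c - c0) = c - c0 by apply/rowP => l; rewrite mxE (ord1 j).
by rewrite addrC subrK.
Qed.

End Span.



Section Aff.
Variable R : realType.
Variable k : nat.
Implicit Types u v w a b c z : 'rV[R]_k.
Implicit Types S C A : set 'rV[R]_k.

Lemma affZ A c0 x t : affine_set A -> A c0 -> A (c0 + x) -> A (c0 + t *: x).
Proof.
move=> affA A0 Ax.
have -> : c0 + t *: x = t *: (c0 + x) + (1 - t) *: c0.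
  by apply/rowP => j; rewrite !mxE; ring.
exact: affA.
Qed.

Lemma affD A c0 x y : affine_set A -> A c0 -> A (c0 + x) -> A (c0 + y) ->
  A (c0 + (x + y)).
Proof.
move=> affA A0 Ax Ay.
have h : A (2^-1 *: (c0 + x) + (1 - 2^-1) *: (c0 + y)) by exact: affA.
have -> : c0 + (x + y) = 2 *: (2^-1 *: (c0 + x) + (1 - 2^-1) *: (c0 + y)) + (1 - 2) *: c0.
  by apply/rowP => j; rewrite !mxE; field.
exact: affA.
Qed.

Lemma aff_span C c0 m (B : 'M[R]_(m, k)) u : C c0 ->
  (forall i, C (c0 + row i B)) -> (u <= B)%MS -> aff C (c0 + u).
Proof.
move=> C0 CB uB A affA CA.
rewrite -(mulmxKpV uB) mulmx_sum_row.
have A0 : A c0 by exact: CA.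
apply: (@big_ind _ (fun x => A (c0 + x))); first by rewrite addr0.
  by move=> x y; apply: affD.
move=> i _; apply: affZ => //; exact: CA.
Qed.

Lemma aff_in_span C c0 m (B : 'M[R]_(m, k)) w :
  (forall c, C c -> (c - c0 <= B)%MS) -> aff C w -> (w - c0 <= B)%MS.
Proof.
move=> span aw.
apply: (@aff_min _ _ C [set x | (x - c0 <= B)%MS]) aw; last by [].
move=> x y t /= hx hy.
have -> : t *: x + (1 - t) *: y - c0 = t *: (x - c0) + (1 - t) *: (y - c0).
  by apply/rowP => j; rewrite !mxE; ring.
by apply: addmx_sub; apply: scalemx_sub.
Qed.

Lemma approx_aff C b : approx C b -> aff C b.
Proof.
move=> ap.
have [c0 [C0 _]] := ap 1 ltr01.
have [m [B [CB span]]] := span_exists C c0.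
set Q := pinvmx B *m B.
have f0 : b - c0 - (b - c0) *m Q = 0.
  apply: sn_eq0 => e e0.
  have e1 : 0 < e / (1 + mnorm Q) by rewrite divr_gt0 // ltr_wpDr ?mnorm_ge0.
  have [c [Cc cb]] := ap _ e1.
  have -> : b - c0 - (b - c0) *m Q = (b - c) - (b - c) *m Q.
    have h : (c - c0) *m Q = c - c0 by rewrite /Q mulmxA mulmxKpV // span.
    have -> : b - c0 = (b - c) + (c - c0) by rewrite addrA subrK.
    rewrite mulmxDl h; apply/rowP => j; rewrite !mxE; ring.
  apply: le_lt_trans (snD _ _) _; rewrite snN.
  apply: le_lt_trans (lerD (lexx _) (sn_mul _ _)) _.
  rewrite -{1}(mulr1 (snorm (b - c))) -mulrDr mulrC -ltr_pdivlMl; last first.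
    by rewrite ltr_wpDr ?mnorm_ge0.
  by rewrite mulrC snB.
have bB : (b - c0 <= B)%MS.
  have -> : b - c0 = (b - c0) *m pinvmx B *m B.
    by apply/eqP; rewrite -mulmxA -subr_eq0 f0.
  exact: submxMl.
have := aff_span C0 CB bB.
by rewrite addrC subrK.
Qed.

Lemma ri_nonempty C c0 : convex_set C -> C c0 -> exists z, ri C z.
Proof.
move=> cC C0.
have [m [B [CB span]]] := span_exists C c0.
set e : R := (m.+1%:R * 2)^-1.
have e0 : 0 < e by rewrite invr_gt0 mulr_gt0 // ltr0Sn.
set P := pinvmx B.
set d := e / (mnorm P + 1).
have d0 : 0 < d by rewrite divr_gt0 // ltr_wpDl ?mnorm_ge0.
set z := c0 + \sum_i e *: row i B.
have zB : (z - c0 <= B)%MS.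
  rewrite /z addrC addKr; apply: summx_sub => i _; apply: scalemx_sub.
  exact: row_sub.
have key : forall w, snorm (w - z) < d -> aff C w -> C w.
  move=> w wz aw.
  have wB : (w - z <= B)%MS.
    have -> : w - z = (w - c0) - (z - c0) by rewrite opprB addrA subrK.
    by apply: addmx_sub; [exact: aff_in_span aw| rewrite -scaleN1r; apply: scalemx_sub].
  set l := (w - z) *m P.
  have lB : l *m B = w - z by rewrite /l mulmxKpV.
  have lbound : forall i, `|l ord0 i| <= e.
    move=> i; apply: le_trans (coord_le_sn _ _) _.
    apply: le_trans (sn_mul _ _) _.
    apply: (@le_trans _ _ (d * mnorm P)).
      apply: ler_wpM2r; [exact: mnorm_ge0| exact: ltW].
    rewrite /d mulrAC ler_pdivrMr ?ltr_wpDl ?mnorm_ge0 //.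
    by rewrite ler_pM2l // lerDl.
  have -> : w = c0 + \sum_i (e + l ord0 i) *: row i B.
    under eq_bigr do rewrite scalerDl.
    rewrite big_split /= addrA -/z -mulmx_sum_row lB.
    by rewrite addrC subrK.
  apply: cvx_comb => //.
    move=> i; have := lbound i; rewrite ler_norml => /andP[h _].
    lra.
  apply: (@le_lt_trans _ _ (\sum_(i < m) (2 * e))).
    apply: ler_sum => i _; have := lbound i; rewrite ler_norml => /andP[_ h].
    lra.
  rewrite sumr_const card_ord.
  have -> : (2 * e) *+ m = m%:R / m.+1%:R.
    by rewrite /e -mulr_natl; field; rewrite nat1r pnatr_eq0.
  by rewrite ltr_pdivrMr ?ltr0Sn // mul1r ltr_nat.
exists z; apply/riP; split; last by exists d.
apply: key; first by rewrite subrr /snorm big1 // => j _; rewrite mxE normr0.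
have := aff_span C0 CB zB; by rewrite addrC subrK.
Qed.

Lemma seg C a b (l : R) : convex_set C -> ri C a -> approx C b -> 0 <= l < 1 ->
  ri C (l *: b + (1 - l) *: a).
Proof.
move=> cC /riP [Ca [d [d0 H]]] ap /andP [l0 l1].
have l1' : 0 < 1 - l by rewrite subr_gt0.
have bA : aff C b := approx_aff ap.
set z := l *: b + (1 - l) *: a.
set d' := (1 - l) * d / 2.
have d'0 : 0 < d' by rewrite /d' divr_gt0 // mulr_gt0.
have key : forall w, snorm (w - z) < d' -> aff C w -> C w.
  move=> w wz aw.
  have [c [Cc cb]] := ap _ d'0.
  set a' := (1 - l)^-1 *: w + (1 - (1 - l)^-1) *: c.
  have Ca' : C a'.
    apply: H; last by apply: aff_affine => //; exact: sub_aff.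
    have -> : a' - a = (1 - l)^-1 *: ((w - z) + l *: (b - c)).
      apply/rowP => j; rewrite !mxE; field; exact: lt0r_neq0.
    rewrite snZ ger0_norm ?invr_ge0 ?ltW //.
    rewrite mulrC ltr_pdivrMr //.
    apply: le_lt_trans (snD _ _) _; rewrite snZ ger0_norm //.
    have h2 : l * snorm (b - c) <= d'.
      rewrite snB; apply: le_trans (ler_wpM2r (sn_ge0 _) (ltW l1)) _.
      by rewrite mul1r ltW.
    apply: (@lt_le_trans _ _ (d' + d')); first by apply: ltr_leD.
    by rewrite /d' -splitr mulrC.
  have -> : w = l *: c + (1 - l) *: a'.
    apply/rowP => j; rewrite !mxE; field; exact: lt0r_neq0.
  apply: cC => //; rewrite l0 /=; exact: ltW.
apply/riP; split; last by exists d'.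
apply: key; first by rewrite subrr /snorm big1 // => j _; rewrite mxE normr0.
by apply: aff_affine => //; exact: sub_aff.
Qed.

End Aff.



Section NC.
Variable R : realType.
Variable k : nat.
Implicit Types u v w a b c z : 'rV[R]_k.
Implicit Types S C X T : set 'rV[R]_k.

Lemma approx_self S : S `<=` approx S.
Proof.
move=> x Sx e e0; exists x; split => //.
by rewrite subrr /snorm big1 // => j _; rewrite mxE normr0.
Qed.

Lemma approx_seg T a b :
  (forall l : R, 0 <= l < 1 -> T (l *: b + (1 - l) *: a)) -> approx T b.
Proof.
move=> H e e0.
set s := snorm (a - b).
have s0 : 0 <= s by exact: sn_ge0.
set t := e / (s + e + 1).
have t0 : 0 < t by rewrite divr_gt0 //; lra.
have t1 : t < 1 by rewrite ltr_pdivrMr; lra.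
exists ((1 - t) *: b + (1 - (1 - t)) *: a); split.
  by apply: H; lra.
have -> : (1 - t) *: b + (1 - (1 - t)) *: a - b = t *: (a - b).
  by apply/rowP => j; rewrite !mxE; ring.
rewrite snZ ger0_norm ?ltW // -/s /t mulrAC ltr_pdivrMr; last lra.
rewrite ltr_pM2l //; lra.
Qed.

Lemma nc_ri_sub X C : C `<=` X -> X `<=` approx C -> ri C `<=` ri X.
Proof.
move=> CX XC z /riP [Cz [d [d0 H]]]; apply/riP; split; first exact: CX.
exists d; split => // w wz aw; apply: CX; apply: H => //.
move: aw; apply: aff_min; first exact: aff_affine.
move=> x Xx; exact: approx_aff (XC _ Xx).
Qed.

Lemma nc_prol X C z a (d : R) : convex_set C -> X `<=` approx C -> ri C a ->
  0 < d -> X (z + d *: (z - a)) -> ri C z.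
Proof.
move=> cC XC ra d0 Xb.
have l01 : 0 <= (1 + d)^-1 < 1.
  apply/andP; split; first by rewrite invr_ge0; lra.
  by rewrite invf_lt1; lra.
have := seg cC ra (XC _ Xb) l01.
have -> : (1 + d)^-1 *: (z + d *: (z - a)) + (1 - (1 + d)^-1) *: a = z => //.
apply/rowP => j; rewrite !mxE; field; lra.
Qed.

Lemma nc_ri_eq X C : convex_set C -> C `<=` X -> X `<=` approx C -> ri X = ri C.
Proof.
move=> cC CX XC; rewrite predeqE => z; split; last exact: nc_ri_sub.
move=> rz; have [Xz _] := rz.
have [c0 [C0 _]] := XC _ Xz 1 ltr01.
have [a ra] := ri_nonempty cC C0.
have [d0 d00 H] := ri_prol rz (CX _ ra.1).
apply: (nc_prol cC XC ra d00); apply: H; rewrite lexx; lra.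
Qed.

Lemma nc_char X C z : convex_set C -> C `<=` X -> X `<=` approx C -> X z ->
  (forall c, X c -> exists2 d : R, 0 < d & X (z + d *: (z - c))) -> ri X z.
Proof.
move=> cC CX XC Xz H.
have [c0 [C0 _]] := XC _ Xz 1 ltr01.
have [a ra] := ri_nonempty cC C0.
have [d d0 Xd] := H _ (CX _ ra.1).
apply: (nc_ri_sub CX XC); exact: nc_prol cC XC ra d0 Xd.
Qed.

End NC.



Section Graph.
Variable R : realType.
Variables n p : nat.
Variable F : 'rV[R]_n -> set 'rV[R]_p.

Lemma gphP x y : gph F (row_mx x y) <-> F x y.
Proof.
split; last by move=> Fxy; exists x, y.
by move=> [x' [y' [Fxy /eq_row_mx [-> ->]]]].
Qed.

Lemma comb_row (l : R) (x x' : 'rV[R]_n) (y y' : 'rV[R]_p) :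
  l *: row_mx x y + (1 - l) *: row_mx x' y' =
  row_mx (l *: x + (1 - l) *: x') (l *: y + (1 - l) *: y').
Proof. by rewrite !scale_row_mx add_row_mx. Qed.

Lemma prol_row (d : R) (x x' : 'rV[R]_n) (y y' : 'rV[R]_p) :
  row_mx x y + d *: (row_mx x y - row_mx x' y') =
  row_mx (x + d *: (x - x')) (y + d *: (y - y')).
Proof. by rewrite opp_row_mx add_row_mx scale_row_mx add_row_mx. Qed.

Lemma sn_row (x : 'rV[R]_n) (y : 'rV[R]_p) : snorm (row_mx x y) = snorm x + snorm y.
Proof.
rewrite /snorm big_split_ord /=; congr (_ + _); apply: eq_bigr => j _.
  by rewrite row_mxEl.
by rewrite row_mxEr.
Qed.

Lemma approx_proj (K : set 'rV[R]_(n + p)) x y :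
  approx K (row_mx x y) -> approx [set x | exists y, K (row_mx x y)] x.
Proof.
move=> ap e e0; have [c [Kc ce]] := ap e e0.
exists (lsubmx c); split; first by exists (rsubmx c); rewrite hsubmxK.
apply: le_lt_trans ce.
rewrite -{2}(hsubmxK c) opp_row_mx add_row_mx sn_row lerDl; exact: sn_ge0.
Qed.

Variable K : set 'rV[R]_(n + p).
Hypothesis cK : convex_set K.
Hypothesis KG : K `<=` gph F.
Hypothesis GK : gph F `<=` approx K.

Let K1 := [set x | exists y, K (row_mx x y)].

Lemma cK1 : convex_set K1.
Proof.
move=> x x' t [y Ky] [y' Ky'] t01; exists (t *: y + (1 - t) *: y').
by rewrite -comb_row; apply: cK.
Qed.

Lemma K1D : K1 `<=` dom F.
Proof. move=> x [y /KG /gphP Fxy]; by exists y. Qed.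

Lemma DK1 : dom F `<=` approx K1.
Proof. move=> x [y Fxy]; apply: (@approx_proj K x y); apply: GK; exact/gphP. Qed.

Lemma stepA x : ri (dom F) x -> exists y0, ri K (row_mx x y0).
Proof.
move=> rx; have [[y Fxy] _] := rx.
have [c0 [K0 _]] := GK (proj2 (gphP x y) Fxy) ltr01.
have [r rr] := ri_nonempty cK K0.
have Gr := KG rr.1; rewrite -(hsubmxK r) in rr Gr.
move: rr Gr; set a := lsubmx r; set b := rsubmx r => rr /gphP Fab.
have [d0 d00 H] := ri_prol rx (ex_intro _ b Fab : dom F a).
have [y2 Fy2] : dom F (x + d0 *: (x - a)) by apply: H; rewrite lexx; lra.
have l01 : 0 <= (1 + d0)^-1 < 1.
  apply/andP; split; first by rewrite invr_ge0; lra.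
  by rewrite invf_lt1; lra.
have := seg cK rr (GK (proj2 (gphP _ _) Fy2)) l01.
rewrite comb_row.
have -> : (1 + d0)^-1 *: (x + d0 *: (x - a)) + (1 - (1 + d0)^-1) *: a = x.
  apply/rowP => j; rewrite !mxE; field; lra.
by move=> h; eexists; exact: h.
Qed.

Lemma Fx_nc x : ri (dom F) x ->
  [/\ convex_set [set y | K (row_mx x y)], [set y | K (row_mx x y)] `<=` F x &
      F x `<=` approx [set y | K (row_mx x y)]].
Proof.
move=> rx; split.
- move=> y y' t Ky Ky' t01 /=.
  have -> : x = t *: x + (1 - t) *: x by apply/rowP => j; rewrite !mxE; ring.
  by rewrite -comb_row; apply: cK.
- by move=> y /KG /gphP.
have [y0 r0] := stepA rx.
move=> y Fxy; apply: (approx_seg (a := y0)) => l l01.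
have := seg cK r0 (GK (proj2 (gphP _ _) Fxy)) l01.
rewrite comb_row.
have -> : l *: x + (1 - l) *: x = x by apply/rowP => j; rewrite !mxE; ring.
by move=> [].
Qed.

Lemma riK_riG z : ri K z -> ri (gph F) z.
Proof. exact: nc_ri_sub. Qed.

Lemma F1 x y : ri (dom F) x -> ri (F x) y -> ri K (row_mx x y).
Proof.
move=> rx ry.
have [y0 r0] := stepA rx.
have Fy0 : F x y0 by apply/gphP; apply: KG; exact: r0.1.
have [d0 d00 H] := ri_prol ry Fy0.
have Fy2 : F x (y + d0 *: (y - y0)) by apply: H; rewrite lexx; lra.
apply: (nc_prol cK GK r0 d00).
rewrite prol_row subrr scaler0 addr0; exact/gphP.
Qed.

Lemma F2 x y : ri K (row_mx x y) -> ri (dom F) x /\ ri (F x) y.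
Proof.
move=> rK; have rG := riK_riG rK.
have Fxy : F x y by apply/gphP; exact: KG rK.1.
have rx : ri (dom F) x.
  apply: (nc_char cK1 K1D DK1); first by exists y.
  move=> c [y' Fcy'].
  have [d0 d00 H] := ri_prol rG (proj2 (gphP _ _) Fcy').
  have := H d0; rewrite lexx andbT ltW // => /(_ isT).
  by rewrite prol_row => /gphP Fz; exists d0 => //; eexists; exact: Fz.
split => //.
have [c1 c2 c3] := Fx_nc rx.
apply: (nc_char c1 c2 c3) => // c Fxc.
have [d0 d00 H] := ri_prol rG (proj2 (gphP _ _) Fxc).
have := H d0; rewrite lexx andbT ltW // => /(_ isT).
rewrite prol_row subrr scaler0 addr0 => /gphP Fz; by exists d0.
Qed.

End Graph.



Section Main.
Variable R : realType.
Variables n p : nat.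
Variable F : 'rV[R]_n -> set 'rV[R]_p.
Variable Om : set 'rV[R]_n.
Variable K : set 'rV[R]_(n + p).
Hypothesis cK : convex_set K.
Hypothesis KG : K `<=` gph F.
Hypothesis GK : gph F `<=` approx K.
Variable W : set 'rV[R]_n.
Hypothesis cW : convex_set W.
Hypothesis WO : W `<=` Om.
Hypothesis OW : Om `<=` approx W.
Variable x0 : 'rV[R]_n.
Hypothesis x0D : ri (dom F) x0.
Hypothesis x0O : ri Om x0.

Let S := image_set F Om.
Let T := [set y | exists x, W x /\ K (row_mx x y)].

Lemma l01 (d : R) : 0 < d -> 0 <= (1 + d)^-1 < 1.
Proof.
move=> d0; apply/andP; split; first by rewrite invr_ge0; lra.
by rewrite invf_lt1; lra.
Qed.

Lemma cT : convex_set T.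
Proof.
move=> y y' t [x [Wx Ky]] [x' [Wx' Ky']] t01.
exists (t *: x + (1 - t) *: x'); split; first exact: cW.
by rewrite -comb_row; apply: cK.
Qed.

Lemma TS : T `<=` S.
Proof. move=> y [x [Wx /KG /gphP Fxy]]; exists x => //; exact: WO. Qed.

Lemma ST : S `<=` approx T.
Proof.
move=> y [x1 Ox1 Fxy].
have [y0 r0] := stepA cK KG GK x0D.
have x0W : ri W x0 by rewrite -(nc_ri_eq cW WO OW).
apply: (approx_seg (a := y0)) => l l1.
exists (l *: x1 + (1 - l) *: x0); split.
  exact: (seg cW x0W (OW Ox1) l1).1.
have := (seg cK r0 (GK (proj2 (gphP _ _ _) Fxy)) l1).1.
by rewrite comb_row.
Qed.

Lemma main_eq : ri S = \bigcup_(x in ri Om `&` ri (dom F)) ri (F x).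
Proof.
rewrite predeqE => y; split.
  move=> ry.
  have [y0 r0] := stepA cK KG GK x0D.
  have Fy0 : F x0 y0 by apply/gphP; exact: KG r0.1.
  have Sy0 : S y0 by exists x0 => //; exact: x0O.1.
  have [d0 d00 H] := ri_prol ry Sy0.
  have [x1 Ox1 Fx1] : S (y + d0 *: (y - y0)) by apply: H; rewrite lexx; lra.
  have x0W : ri W x0 by rewrite -(nc_ri_eq cW WO OW).
  set x := (1 + d0)^-1 *: x1 + (1 - (1 + d0)^-1) *: x0.
  have rW : ri W x := seg cW x0W (OW Ox1) (l01 d00).
  have := seg cK r0 (GK (proj2 (gphP _ _ _) Fx1)) (l01 d00).
  rewrite comb_row -/x.
  have -> : (1 + d0)^-1 *: (y + d0 *: (y - y0)) + (1 - (1 + d0)^-1) *: y0 = y.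
    apply/rowP => j; rewrite !mxE; field; lra.
  move=> /(F2 cK KG GK) [rxD rxy].
  exists x => //; split => //.
  exact: nc_ri_sub WO OW _ rW.
move=> [x [rxO rxD] rxy].
have rG := riK_riG KG GK (F1 cK KG GK rxD rxy).
have Fxy : F x y := rxy.1.
apply: (nc_char cT TS ST); first by exists x => //; exact: rxO.1.
move=> c [x1 Ox1 Fx1c].
have [d1 d10 H1] := ri_prol rG (proj2 (gphP _ _ _) Fx1c).
have [d2 d20 H2] := ri_prol rxO Ox1.
exists (Num.min d1 d2); first by rewrite lt_min d10 d20.
have hm : 0 <= Num.min d1 d2 by rewrite le_min !ltW.
have := H1 (Num.min d1 d2); rewrite hm ge_min lexx /= => /(_ isT).
rewrite prol_row => /gphP Fz.
exists (x + Num.min d1 d2 *: (x - x1)) => //.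
by apply: H2; rewrite hm ge_min lexx orbT.
Qed.

End Main.

Theorem theorem3p1 (R : realType) (n p : nat)
  (F : 'rV[R]_n -> set 'rV[R]_p) (Om : set 'rV[R]_n) :
  nearly_convex_map F -> nearly_convex Om ->
  ri (dom F) `&` ri Om !=set0 ->
  ri (image_set F Om) = \bigcup_(x in ri Om `&` ri (dom F)) ri (F x).
Proof.
move=> [K [cK [KG GK]]] [W [cW [WO OW]]] [x0 [x0D x0O]].
apply: (main_eq cK KG _ cW WO _ x0D x0O).
  by move=> z /GK; exact: closure_approx.
by move=> z /OW; exact: closure_approx.
Qed.
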